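(* Let $\Omega\subset\mathbb{C}^n$ be a bounded domain, let $\mathcal R$ and $\mathcal R'$ be quasi-free Hilbert modules of rank $m$, $1\le m<\infty$, over $A(\Omega)$ with generating sets $\{f_i\}_{i=1}^m$ and $\{g_i\}_{i=1}^m$, and let $\delta=\delta(\mathcal R,\mathcal R')$. For each $z\in\Omega$, the map $\delta\otimes_{A(\Omega)}1_z:\mathcal R\otimes_{A(\Omega)}\mathbb C_z\to\mathcal R'\otimes_{A(\Omega)}\mathbb C_z$, $h\otimes 1_z\mapsto \delta h\otimes1_z$ ($h$ in the domain of $\delta$), is well-defined. Moreover, $\delta\otimes_{A(\Omega)}1_z$ is an invertible operator between these $m$-dimensional Hilbert spaces.
   Context: $A(\Omega)$ is the closure, in the supremum norm on $\Omega$, of the set of functions holomorphic on some neighbourhood of $\overline\Omega$; $\ell^2_m$ is the $m$-dimensional Hilbert space. A quasi-free Hilbert module of rank $m$ over $A(\Omega)$ is a Hilbert space $\mathcal R$ obtained as the completion of $A(\Omega)\otimes\ell^2_m$ (regarded as $\ell^2_m$-valued holomorphic functions on $\Omega$) with respect to an inner product such that: (1) for each $z\in\Omega$ evaluation at $z$ is bounded, with norm locally uniformly bounded in $z$; (2) $\|\varphi F\|_{\mathcal R}\le\|\varphi\|_{A(\Omega)}\|F\|_{\mathcal R}$; (3) if $(F_i)$ is Cauchy in $\mathcal R$-norm, then $F_i(z)\to0$ for all $z$ iff $\|F_i\|_{\mathcal R}\to0$. $A(\Omega)$ acts by multiplication. For $z\in\Omega$, $\mathbb C_z$ is $\mathbb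 C$ with action $\varphi\cdot\lambda=\varphi(z)\lambda$; the localization $\mathcal R\otimes_{A(\Omega)}\mathbb C_z$ is identified with $\mathcal R/\mathcal R_z$, where $\mathcal R_z$ is the closure of $A(\Omega)_z\mathcal R$, $A(\Omega)_z=\{\varphi\in A(\Omega):\varphi(z)=0\}$; $h\otimes1_z$ is the class of $h$. A generating set is $\{f_1,\dots,f_m\}\subset\mathcal R$ whose $A(\Omega)$-multiples span a dense subspace and with $\{f_i\otimes1_z\}$ a basis of $\mathcal R\otimes_{A(\Omega)}\mathbb C_z$ for each $z$. $\delta(\mathcal R,\mathcal R')$ is the closed, densely defined, one-to-one module transformation with dense range whose graph is the closure in $\mathcal R\oplus\mathcal R'$ of the span of $\{\varphi f_i\oplus\varphi g_i:\varphi\in A(\Omega),1\le i\le m\}$. *)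

(* Defs.v *)
(* Complex numbers are R[i] for a
   realType R (mathcomp-real-closed `complex`); C^n is 'rV[C]_n with its
   normed-module topology; holomorphy = complex Frechet differentiability. *)
From mathcomp Require Import all_boot all_algebra.
From mathcomp Require Import all_classical all_reals all_analysis.
From mathcomp Require Import complex.
Import GRing.Theory Num.Theory numFieldTopology.Exports numFieldNormedType.Exports.
Set Implicit Arguments.
Unset Strict Implicit.
Local Open Scope ring_scope.
Local Open Scope classical_set_scope.

Definition CC (R : realType) : numClosedFieldType := R[i].

Section QuasiFree.
Variables (R : realType) (n m : nat).
Local Notation C := (CC R).
Local Notation V := 'rV[C]_n.
Local Notation W := 'rV[C]_m.
Local Notation Fn := (V -> W).

Definition fsub (f g : Fn) : Fn := fun z => f z - g z.
Definition flin (a : C) (f g : Fn) : Fn := fun z => a *: f z + g z.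
Definition fmul (phi : V -> C) (F : Fn) : Fn := fun z => phi z *: F z.
Definition fsum {k : nat} (F : 'I_k -> Fn) : Fn := fun z => \sum_(i < k) F i z.

Definition bounded_domain (Om : set V) :=
  Om !=set0 /\ open Om /\ connected Om /\ bounded_set Om.

Definition holomorphic_on (U : set V) (f : V -> C^o) :=
  forall z, U z -> differentiable f z.

Definition sup_bound (Om : set V) (phi : V -> C) (c : C) :=
  forall z, Om z -> `|phi z| <= c.

(* A(Om): sup-norm (on Om) closure of the functions holomorphic on a
   neighbourhood of the closure of Om (only values on Om matter) *)
Definition A_Omega (Om : set V) : set (V -> C) :=
  [set phi | forall e : C, 0 < e -> exists (U : set V) (psi : V -> C^o),
      [/\ open U, closure Om `<=` U, holomorphic_on U psi &
          sup_bound Om (fun z => phi z - psi z) e]].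

(* A(Om) (x) l^2_m : l^2_m-valued functions with coordinates in A(Om) *)
Definition A_tensor (Om : set V) : set Fn :=
  [set F | forall j : 'I_m, A_Omega Om (fun z => F z ord0 j)].

Definition ext0 (Om : set V) (F : Fn) : Fn :=
  fun z => if `[< Om z >] then F z else 0.

Definition is_subspace (S : set Fn) :=
  S (fun=> 0) /\ forall a f g, S f -> S g -> S (flin a f g).

Definition is_inner_product (S : set Fn) (ip : Fn -> Fn -> C) :=
  [/\ (forall a f g h, S f -> S g -> S h ->
         ip (flin a f g) h = a * ip f h + ip g h),
      (forall f g, S f -> S g -> ip g f = (ip f g)^*),
      (forall f, S f -> 0 <= ip f f) &
      (forall f, S f -> ip f f = 0 -> f = fun=> 0)].

Definition hnorm (ip : Fn -> Fn -> C) (f : Fn) : C := sqrtC (ip f f).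

Definition hcauchy (ip : Fn -> Fn -> C) (u : nat -> Fn) :=
  forall e : C, 0 < e -> exists N, forall p q, (N <= p)%N -> (N <= q)%N ->
    hnorm ip (fsub (u p) (u q)) < e.

Definition hconv (ip : Fn -> Fn -> C) (u : nat -> Fn) (f : Fn) :=
  forall e : C, 0 < e -> exists N, forall p, (N <= p)%N ->
    hnorm ip (fsub (u p) f) < e.

Definition hcomplete (S : set Fn) (ip : Fn -> Fn -> C) :=
  forall u, (forall k, S (u k)) -> hcauchy ip u ->
    exists f, S f /\ hconv ip u f.

Definition hilbert_space (S : set Fn) (ip : Fn -> Fn -> C) :=
  [/\ is_subspace S, is_inner_product S ip & hcomplete S ip].

Definition hclosure (S : set Fn) (ip : Fn -> Fn -> C) (T : set Fn) : set Fn :=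
  [set f | S f /\ forall e : C, 0 < e -> exists g, T g /\ hnorm ip (fsub f g) < e].

(* quasi-free Hilbert module of rank m over A(Om), realized as the Hilbert
   space of l^2_m-valued functions on Om obtained by completing
   A(Om) (x) l^2_m (functions vanish off Om by convention) *)
Definition quasi_free (Om : set V) (S : set Fn) (ip : Fn -> Fn -> C) :=
  hilbert_space S ip /\
      (forall f z, S f -> ~ Om z -> f z = 0) /\
      (forall F, A_tensor Om F -> S (ext0 Om F)) /\
      (forall f, S f -> hclosure S ip [set ext0 Om F | F in A_tensor Om] f) /\
      (forall z, Om z -> exists r M : C, 0 < r /\
         forall w f, Om w -> `|w - z| < r -> S f -> `|f w| <= M * hnorm ip f) /\
      (forall phi F, A_Omega Om phi -> S F ->
         S (fmul phi F) /\
         forall c, sup_bound Om phi c -> hnorm ip (fmul phi F) <= c * hnorm ip F) /\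
      (forall u, (forall k, S (u k)) -> hcauchy ip u ->
         ((forall z, Om z -> (fun k => u k z) @ \oo --> (0 : W)) <->
          (fun k => hnorm ip (u k)) @ \oo --> (0 : C))).

(* the closed submodule R_z = closure of A(Om)_z R *)
Definition AzR (Om : set V) (S : set Fn) (z : V) : set Fn :=
  [set f | exists k (phi : 'I_k -> V -> C) (F : 'I_k -> Fn),
      (forall i, [/\ A_Omega Om (phi i), phi i z = 0 & S (F i)]) /\
      f = fsum (fun i => fmul (phi i) (F i))].

Definition Rz (Om : set V) (S : set Fn) (ip : Fn -> Fn -> C) (z : V) : set Fn :=
  hclosure S ip (AzR Om S z).

Definition Aspan (Om : set V) (fs : 'I_m -> Fn) : set Fn :=
  [set f | exists k (phi : 'I_k -> V -> C) (idx : 'I_k -> 'I_m),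
      (forall j, A_Omega Om (phi j)) /\ f = fsum (fun j => fmul (phi j) (fs (idx j)))].

Definition generating_set (Om : set V) (S : set Fn) (ip : Fn -> Fn -> C)
    (fs : 'I_m -> Fn) :=
  [/\ (forall i, S (fs i)),
      (forall f, S f -> hclosure S ip (Aspan Om fs) f) &
      (forall z, Om z ->
        (forall c : 'I_m -> C,
           Rz Om S ip z (fsum (fun i => fmul (fun=> c i) (fs i))) ->
           forall i, c i = 0) /\
        (forall f, S f -> exists c : 'I_m -> C,
           Rz Om S ip z (fsub f (fsum (fun i => fmul (fun=> c i) (fs i))))))].

(* graph of delta(R, R'): closure in R (+) R' of the span of
   {phi f_i (+) phi g_i} *)
Definition delta_graph (Om : set V) (S : set Fn) (ip : Fn -> Fn -> C)
    (S' : set Fn) (ip' : Fn -> Fn -> C) (fs gs : 'I_m -> Fn) (h k : Fn) :=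
  S h /\ S' k /\ forall e : C, 0 < e ->
    exists K (c : 'I_K -> C) (phi : 'I_K -> V -> C) (idx : 'I_K -> 'I_m),
      (forall j, A_Omega Om (phi j)) /\
      let a := fsum (fun j => fmul (fun w => c j * phi j w) (fs (idx j))) in
      let b := fsum (fun j => fmul (fun w => c j * phi j w) (gs (idx j))) in
      sqrtC (ip (fsub h a) (fsub h a) + ip' (fsub k b) (fsub k b)) < e.

End QuasiFree.

(* Main.v *)
Require Import Defs.
From mathcomp Require Import all_boot all_algebra.
From mathcomp Require Import all_classical all_reals all_analysis.
From mathcomp Require Import complex.
Import GRing.Theory Num.Theory numFieldTopology.Exports numFieldNormedType.Exports.
Import order.Order.TTheory.
Local Open Scope ring_scope.
Local Open Scope classical_set_scope.
Set Implicit Arguments.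
Unset Strict Implicit.

Section Aux.
Variables (R : realType) (n m : nat).
Local Notation C := (CC R).
Local Notation V := 'rV[C]_n.
Local Notation W := 'rV[C]_m.
Local Notation Fn := (V -> W).

Lemma small0 (y : C) : 0 <= y -> (forall e : C, 0 < e -> y <= e) -> y = 0.
Proof.
move=> y0 H; move: y0; rewrite le_eqVlt => /orP[/eqP<-//|ypos].
have h2 : (0 : C) < 2^-1 by rewrite invr_gt0 ltr0n.
have := H (y * 2^-1) (mulr_gt0 ypos h2).
have : y * 2^-1 < y by rewrite gtr_pMr // invf_lt1 ?ltr0n // ltr1n.
by move=> /lt_le_trans h /h; rewrite ltxx.
Qed.

Lemma small1 {A y : C} : 0 <= A -> 0 <= y ->
  (forall e : C, 0 < e -> y <= A * e) -> y = 0.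
Proof.
move=> A0 y0 H; apply: small0 => // e e0.
have A1 : 0 < A + 1 by rewrite ltr_wpDl // ltr01.
apply: le_trans (H (e / (A + 1)) (divr_gt0 e0 A1)) _.
rewrite mulrA ler_pdivrMr // mulrDr mulr1 [e * A]mulrC lerDl ltW //.
Qed.


Lemma sub_fsub {S : set Fn} {f g} : is_subspace S -> S f -> S g -> S (fsub f g).
Proof.
case=> _ H Sf Sg.
have -> : fsub f g = flin (-1) g f.
  by apply: funext => w; rewrite /fsub /flin scaleN1r addrC.
exact: H.
Qed.

Lemma sub_fsum {S : set Fn} {k} {F : 'I_k -> Fn} :
  is_subspace S -> (forall i, S (F i)) -> S (fsum F).
Proof.
move=> HS; elim: k F => [|k IH] F HF.
  have -> : fsum F = fun=> 0 by apply: funext => w; rewrite /fsum big_ord0.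
  by case: HS.
have -> : fsum F = flin 1 (fsum (fun i : 'I_k => F (widen_ord (leqnSn k) i)))
                         (F ord_max).
  by apply: funext => w; rewrite /fsum /flin big_ord_recr scale1r.
case: HS => _ Hl; apply: Hl => //; exact: IH.
Qed.

Lemma ip00 {S : set Fn} {ip} : is_inner_product S ip -> S (fun=> 0) ->
  ip (fun=> 0) (fun=> 0) = 0.
Proof.
case=> Hl _ _ _ S0.
have := Hl (-1) _ _ _ S0 S0 S0.
have -> : flin (-1) (fun _ : V => (0:W)) (fun _ : V => (0:W)) = (fun _ : V => (0:W)).
  by apply: funext => w; rewrite /flin scaler0 addr0.
by rewrite mulN1r addNr.
Qed.

Lemma hnorm_ge0 {S : set Fn} {ip} {f} : is_inner_product S ip -> S f ->
  0 <= hnorm ip f.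
Proof. by case=> _ _ H _ Sf; rewrite /hnorm sqrtC_ge0; exact: H. Qed.

Lemma A_const (Om : set V) (c : C) : A_Omega Om (fun=> c).
Proof.
move=> e e0; exists setT, (fun=> c : C^o); split.
- exact: openT.
- by [].
- by move=> w _; apply: differentiable_cst.
- by move=> w _; rewrite subrr normr0 ltW.
Qed.

Lemma QF_sub {Om} {S : set Fn} {ip} : quasi_free Om S ip -> is_subspace S.
Proof. by case=> -[]. Qed.

Lemma QF_ip {Om} {S : set Fn} {ip} : quasi_free Om S ip -> is_inner_product S ip.
Proof. by case=> -[]. Qed.

Lemma QF_const {Om} {S : set Fn} {ip} {v : W} : quasi_free Om S ip ->
  S (ext0 Om (fun=> v)).
Proof.
case=> _ [_ [H _]]; apply: H => j; exact: A_const.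
Qed.

Lemma QF_fmul {Om} {S : set Fn} {ip} {phi} {F} : quasi_free Om S ip ->
  A_Omega Om phi -> S F -> S (fmul phi F).
Proof. by case=> _ [_ [_ [_ [_ [H _]]]]] Ap SF; case: (H phi F Ap SF). Qed.

Lemma QF_fmulc {Om} {S : set Fn} {ip} {c : C} {phi} {F} : quasi_free Om S ip ->
  A_Omega Om phi -> S F -> S (fmul (fun w => c * phi w) F).
Proof.
move=> QF Ap SF.
have -> : fmul (fun w => c * phi w) F = flin c (fmul phi F) (fun=> 0).
  by apply: funext => w; rewrite /flin /fmul addr0 scalerA.
have [S0 Hl] := QF_sub QF; apply: Hl; [exact: QF_fmul QF Ap SF | exact: S0].
Qed.

Lemma QF_eval {Om} {S : set Fn} {ip} {z} : quasi_free Om S ip -> Om z ->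
  exists M : C, 0 <= M /\ forall f, S f -> `|f z| <= M * hnorm ip f.
Proof.
move=> QF Oz; have Sip := QF_ip QF.
case: QF => _ [_ [_ [_ [H1 _]]]].
have [r [M [r0 HM]]] := H1 z Oz.
exists `|M|; split => // f Sf.
have h : `|f z| <= M * hnorm ip f by apply: HM => //; rewrite subrr normr0.
have t0 := hnorm_ge0 Sip Sf.
have p : 0 <= M * hnorm ip f := le_trans (normr_ge0 _) h.
by rewrite -(ger0_norm p) normrM (ger0_norm t0) in h.
Qed.


Lemma evalRz {Om} {S : set Fn} {ip} {z} {f} : quasi_free Om S ip -> Om z ->
  Rz Om S ip z f -> f z = 0.
Proof.
move=> QF Oz [Sf Hc].
have [M [M0 HM]] := QF_eval QF Oz.
have Ssub := QF_sub QF.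
apply/eqP; rewrite -normr_eq0; apply/eqP.
apply: (small1 M0 (normr_ge0 _)) => e e0.
have [g [[k [phi [F [HF Hgdef]]]] Hg]] := Hc e e0.
have Sg : S g.
  rewrite Hgdef; apply: sub_fsum Ssub _ => i.
  by case: (HF i) => Ap _ SF; exact: QF_fmul QF Ap SF.
have gz : g z = 0.
  rewrite Hgdef /fsum big1 // => i _; rewrite /fmul.
  by case: (HF i) => _ -> _; rewrite scale0r.
have -> : `|f z| = `|fsub f g z| by rewrite /fsub gz subr0.
apply: le_trans (HM _ (sub_fsub Ssub Sf Sg)) _.
by rewrite ler_wpM2l // ltW.
Qed.

Definition Fmat (fs : 'I_m -> Fn) (z : V) : 'M[C]_m := \matrix_i (fs i z).

Lemma sum_mx (fs : 'I_m -> Fn) z (c : 'I_m -> C) :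
  \sum_i c i *: fs i z = (\row_i c i) *m Fmat fs z.
Proof. by rewrite mulmx_sum_row; apply: eq_bigr => i _; rewrite rowK mxE. Qed.

Lemma Fspan {Om} {S : set Fn} {ip} {fs} {z} {f} : quasi_free Om S ip ->
  generating_set Om S ip fs -> Om z -> S f ->
  exists c : 'I_m -> C, f z = \sum_i c i *: fs i z.
Proof.
move=> QF [_ _ Hz] Oz Sf.
have [_ H] := Hz z Oz; have [c Hc] := H f Sf.
exists c; have := evalRz QF Oz Hc.
by rewrite /fsub /fsum /fmul => /eqP; rewrite subr_eq0 => /eqP.
Qed.

Lemma Funit {Om} {S : set Fn} {ip} {fs} {z} : quasi_free Om S ip ->
  generating_set Om S ip fs -> Om z -> Fmat fs z \in unitmx.
Proof.
move=> QF GS Oz.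
have H : forall j : 'I_m, exists c : 'I_m -> C,
    ext0 Om (fun=> delta_mx 0 j) z = \sum_i c i *: fs i z.
  move=> j; exact: (Fspan QF GS Oz (QF_const QF)).
have [cc Hcc] := choice H.
have D1 : (\matrix_j (\row_i cc j i)) *m Fmat fs z = 1%:M.
  apply/row_matrixP => j; rewrite row_mul rowK row1 -sum_mx -Hcc.
  by rewrite /ext0 (asboolT Oz).
by case: (mulmx1_unit D1).
Qed.

Lemma Rz_of_zero {Om} {S : set Fn} {ip} {fs} {z} {f} : quasi_free Om S ip ->
  generating_set Om S ip fs -> Om z -> S f -> f z = 0 -> Rz Om S ip z f.
Proof.
move=> QF GS Oz Sf fz.
have FU := Funit QF GS Oz.
case: GS => [_ _ Hz]; have [_ H] := Hz z Oz; have [c Hc] := H f Sf.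
have := evalRz QF Oz Hc; rewrite /fsub /fsum /fmul fz sub0r => /eqP.
rewrite oppr_eq0 => /eqP; rewrite sum_mx => hc.
have c0 : \row_i c i = 0 by rewrite -(mulmxK FU (\row_i c i)) hc mul0mx.
have c0' : forall i, c i = 0.
  by move=> i; have := congr1 (fun v : 'rV[C]_m => v 0 i) c0; rewrite !mxE.
have -> : f = fsub f (fsum (fun i => fmul (fun=> c i) (fs i))).
  apply: funext => w; rewrite /fsub /fsum /fmul big1 ?subr0 // => i _.
  by rewrite c0' scale0r.
exact: Hc.
Qed.


Lemma entry_le (x : 'rV[C]_m) i : `|x 0 i| <= `|x|.
Proof.
have -> : `|x| = mx_norm x by []. rewrite mx_normE.
rewrite -[X in X <= _]nngE num_le. exact: (le_bigmax _ _ (0, i)).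
Qed.

Lemma opbound (x : 'rV[C]_m) (X : 'M[C]_m) :
  `|x *m X| <= (\sum_i `|row i X|) * `|x|.
Proof.
rewrite mulmx_sum_row; apply: le_trans (ler_norm_sum _ _ _) _.
rewrite mulr_suml; apply: ler_sum => i _.
by rewrite normrZ mulrC ler_wpM2l // entry_le.
Qed.


Lemma graph_eval {Om} {S S' : set Fn} {ip ip'} {fs gs} {z} {h k} :
  quasi_free Om S ip -> quasi_free Om S' ip' ->
  generating_set Om S ip fs -> generating_set Om S' ip' gs -> Om z ->
  delta_graph Om S ip S' ip' fs gs h k ->
  k z = h z *m (invmx (Fmat fs z) *m Fmat gs z).
Proof.
move=> QF QF' GS GS' Oz [Sh [Sk Hg]].
set X := invmx (Fmat fs z) *m Fmat gs z.
have FU := Funit QF GS Oz.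
have gen : forall i, fs i z *m X = gs i z.
  move=> i.
  have rF : fs i z = delta_mx 0 i *m Fmat fs z by rewrite -rowE rowK.
  by rewrite rF /X mulmxA mulmxK // -rowE rowK.
have [M [M0 HM]] := QF_eval QF Oz.
have [M' [M'0 HM']] := QF_eval QF' Oz.
have KX0 : 0 <= \sum_i `|row i X| by apply: sumr_ge0 => i _; exact: normr_ge0.
apply/eqP; rewrite -subr_eq0 -normr_eq0; apply/eqP.
apply: (small1 (A := M' + (\sum_i `|row i X|) * M)
   (addr_ge0 M'0 (mulr_ge0 KX0 M0)) (normr_ge0 _)) => e e0.
have [K [c [phi [idx [Aphi Hb]]]]] := Hg e e0.
pose a := fsum (fun j => fmul (fun w => c j * phi j w) (fs (idx j))).
pose b := fsum (fun j => fmul (fun w => c j * phi j w) (gs (idx j))).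
have Hb' : sqrtC (ip (fsub h a) (fsub h a) + ip' (fsub k b) (fsub k b)) < e := Hb.
case: GS => Hfs _ _; case: GS' => Hgs _ _.
have Sa : S a.
  apply: sub_fsum (QF_sub QF) _ => j; exact: QF_fmulc QF (Aphi j) (Hfs (idx j)).
have Sb : S' b.
  apply: sub_fsum (QF_sub QF') _ => j; exact: QF_fmulc QF' (Aphi j) (Hgs (idx j)).
have Sha := sub_fsub (QF_sub QF) Sh Sa.
have Skb := sub_fsub (QF_sub QF') Sk Sb.
have ip1 := hnorm_ge0 (QF_ip QF) Sha.
have ip2 := hnorm_ge0 (QF_ip QF') Skb.
have ipa : 0 <= ip (fsub h a) (fsub h a) by case: (QF_ip QF) => _ _ H _; exact: H.
have ipb : 0 <= ip' (fsub k b) (fsub k b) by case: (QF_ip QF') => _ _ H _; exact: H.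
have na : hnorm ip (fsub h a) <= e.
  apply: le_trans (ltW Hb'); rewrite /hnorm ler_sqrtC ?nnegrE ?addr_ge0 //.
  by rewrite lerDl.
have nb : hnorm ip' (fsub k b) <= e.
  apply: le_trans (ltW Hb'); rewrite /hnorm ler_sqrtC ?nnegrE ?addr_ge0 //.
  by rewrite lerDr.
have ab : a z *m X = b z.
  rewrite /a /b /fsum /fmul mulmx_suml; apply: eq_bigr => j _.
  by rewrite -scalemxAl gen.
have -> : k z - h z *m X = fsub k b z - fsub h a z *m X.
  by rewrite /fsub mulmxBl ab opprB addrA subrK.
apply: le_trans (ler_normB _ _) _.
rewrite mulrDl -mulrA; apply: lerD.
  apply: le_trans (HM' _ Skb) _; exact: ler_wpM2l.
apply: le_trans (opbound _ _) _; apply: ler_wpM2l => //.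
apply: le_trans (HM _ Sha) _; exact: ler_wpM2l.
Qed.


Lemma fsub_self (F : Fn) : fsub F F = (fun _ => 0).
Proof. by apply: funext => w; rewrite /fsub subrr. Qed.

Lemma graph_const {Om} {S S' : set Fn} {ip ip'} {fs gs} (c : 'I_m -> C) :
  quasi_free Om S ip -> quasi_free Om S' ip' ->
  generating_set Om S ip fs -> generating_set Om S' ip' gs ->
  delta_graph Om S ip S' ip' fs gs
    (fsum (fun j => fmul (fun w => c j * 1) (fs j)))
    (fsum (fun j => fmul (fun w => c j * 1) (gs j))).
Proof.
move=> QF QF' [Hfs _ _] [Hgs _ _].
split; [|split].
- apply: sub_fsum (QF_sub QF) _ => j; exact: QF_fmulc QF (A_const Om 1) (Hfs j).
- apply: sub_fsum (QF_sub QF') _ => j; exact: QF_fmulc QF' (A_const Om 1) (Hgs j).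
- move=> e e0; exists m, c, (fun _ _ => 1), id; split => [j|].
    exact: A_const.
  set hc := fsum (fun j => fmul (fun w => c j * 1) (fs j)).
  set kc := fsum (fun j => fmul (fun w => c j * 1) (gs j)).
  change (sqrtC (ip (fsub hc hc) (fsub hc hc) + ip' (fsub kc kc) (fsub kc kc)) < e).
  have [S0 _] := QF_sub QF; have [S'0 _] := QF_sub QF'.
  by rewrite !fsub_self (ip00 (QF_ip QF) S0) (ip00 (QF_ip QF') S'0) addr0 sqrtC0.
Qed.

End Aux.

Unset Implicit Arguments.
Set Strict Implicit.

Theorem lemma2 (R : realType) (n m : nat) (Om : set 'rV[CC R]_n)
    (S S' : set ('rV[CC R]_n -> 'rV[CC R]_m))
    (ip ip' : ('rV[CC R]_n -> 'rV[CC R]_m) -> ('rV[CC R]_n -> 'rV[CC R]_m) -> CC R)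
    (fs gs : 'I_m -> 'rV[CC R]_n -> 'rV[CC R]_m) :
  bounded_domain Om -> (1 <= m)%N ->
  quasi_free Om S ip -> quasi_free Om S' ip' ->
  generating_set Om S ip fs -> generating_set Om S' ip' gs ->
  forall z, Om z ->
  [/\ (* well-defined: h (x) 1_z |-> delta h (x) 1_z *)
      (forall h k, delta_graph Om S ip S' ip' fs gs h k ->
         Rz Om S ip z h -> Rz Om S' ip' z k),
      (* defined on all of R (x) C_z *)
      (forall f, S f -> exists h k, delta_graph Om S ip S' ip' fs gs h k /\
         Rz Om S ip z (fsub f h)),
      (* injective *)
      (forall h k, delta_graph Om S ip S' ip' fs gs h k ->
         Rz Om S' ip' z k -> Rz Om S ip z h) &
      (* surjective *)
      (forall k', S' k' -> exists h k, delta_graph Om S ip S' ip' fs gs h k /\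
         Rz Om S' ip' z (fsub k' k))].
Proof.
move=> _ _ QF QF' GS GS' z Oz.
set X := invmx (Fmat fs z) *m Fmat gs z.
have FU := Funit QF GS Oz; have GU := Funit QF' GS' Oz.
have XU : X \in unitmx by rewrite unitmx_mul unitmx_inv FU GU.
split.
- move=> h k G Rh.
  have hz := evalRz QF Oz Rh.
  have kz := graph_eval QF QF' GS GS' Oz G.
  case: G => _ [Sk _].
  by apply: (Rz_of_zero QF' GS' Oz Sk); rewrite kz hz mul0mx.
- move=> f Sf; have [c fc] := Fspan QF GS Oz Sf.
  have G := graph_const c QF QF' GS GS'.
  eexists; eexists; split; first exact: G.
  case: G => Sh _.
  apply: (Rz_of_zero QF GS Oz (sub_fsub (QF_sub QF) Sf Sh)).
  rewrite /fsub /fsum /fmul fc; apply/eqP; rewrite subr_eq0; apply/eqP.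
  by apply: eq_bigr => i _; rewrite mulr1.
- move=> h k G Rk.
  have kz := evalRz QF' Oz Rk.
  have := graph_eval QF QF' GS GS' Oz G; rewrite kz => /esym hX.
  case: G => Sh _.
  apply: (Rz_of_zero QF GS Oz Sh).
  by rewrite -(mulmxK XU (h z)) hX mul0mx.
- move=> f Sf; have [c fc] := Fspan QF' GS' Oz Sf.
  have G := graph_const c QF QF' GS GS'.
  eexists; eexists; split; first exact: G.
  case: G => _ [Sk _].
  apply: (Rz_of_zero QF' GS' Oz (sub_fsub (QF_sub QF') Sf Sk)).
  rewrite /fsub /fsum /fmul fc; apply/eqP; rewrite subr_eq0; apply/eqP.
  by apply: eq_bigr => i _; rewrite mulr1.
Qed.
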